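(* Let $0\le t\le s$ and $m,n\ge1$ be integers. If there exist a $(t,s,n)$-AONT and a $(t,s,m)$-AONT, then there exists a $(t,s,mn)$-AONT.
   Context: Let $X$ be a finite alphabet with $|X|=v$ and $0\le t\le s$. A $(t,s,v)$-AONT is a bijection $\phi:X^s\to X^s$ such that for every $I\subseteq\{1,\dots,s\}$ with $|I|=t$ and every $J\subseteq\{1,\dots,s\}$ with $|J|=s-t$, the map $x\mapsto\big((x_i)_{i\in I},(\phi(x)_j)_{j\in J}\big)$ is a bijection $X^s\to X^t\times X^{s-t}$ (i.e. fixing any $s-t$ outputs leaves any $t$ inputs completely undetermined). *)

(* Defs.v *)
From mathcomp Require Import all_boot.
Set Implicit Arguments. Unset Strict Implicit. Unset Printing Implicit Defensive.

Definition word (X : finType) (s : nat) := {ffun 'I_s -> X}.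

Definition restr (X : finType) (s : nat) (I : {set 'I_s}) (x : word X s)
  : {ffun {i : 'I_s | i \in I} -> X} := [ffun i => x (val i)].

(* (t,s,v)-AONT over alphabet X (with #|X| = v imposed separately):
   a bijection phi : X^s -> X^s such that for all I, J with |I| = t and
   |J| = s - t, the map x |-> (x|_I, phi(x)|_J) is a bijection. *)
Definition is_AONT (X : finType) (t s : nat) (phi : word X s -> word X s) : Prop :=
  bijective phi /\
  forall I J : {set 'I_s}, #|I| = t -> #|J| = s - t ->
    bijective (fun x : word X s => (restr I x, restr J (phi x))).

Definition AONT_exists (t s v : nat) : Prop :=
  exists (X : finType), #|X| = v /\ exists phi : word X s -> word X s, is_AONT t phi.

(* Main.v *)
Require Import Defs.
From mathcomp Require Import all_boot.
Set Implicit Arguments. Unset Strict Implicit. Unset Printing Implicit Defensive.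

Section Prod.
Variables (Y X D : finType).

Definition fm1 (f : {ffun D -> Y * X}) : {ffun D -> Y} := [ffun i => (f i).1].
Definition fm2 (f : {ffun D -> Y * X}) : {ffun D -> X} := [ffun i => (f i).2].
Definition fpr (a : {ffun D -> Y}) (b : {ffun D -> X}) : {ffun D -> Y * X} :=
  [ffun i => (a i, b i)].

Lemma fm1_pr a b : fm1 (fpr a b) = a.
Proof. by apply/ffunP => i; rewrite !ffunE. Qed.
Lemma fm2_pr a b : fm2 (fpr a b) = b.
Proof. by apply/ffunP => i; rewrite !ffunE. Qed.
Lemma pr_fm f : fpr (fm1 f) (fm2 f) = f.
Proof. by apply/ffunP => i; rewrite !ffunE; case: (f i). Qed.
End Prod.

Section Restr.
Variables (Y X : finType) (s : nat) (I : {set 'I_s}).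
Lemma restr_pr (a : word Y s) (b : word X s) :
  restr I (fpr a b) = fpr (restr I a) (restr I b).
Proof. by apply/ffunP => i; rewrite !ffunE. Qed.
Lemma fm1_restr (z : word (Y * X)%type s) : fm1 (restr I z) = restr I (fm1 z).
Proof. by apply/ffunP => i; rewrite !ffunE. Qed.
Lemma fm2_restr (z : word (Y * X)%type s) : fm2 (restr I z) = restr I (fm2 z).
Proof. by apply/ffunP => i; rewrite !ffunE. Qed.
End Restr.

Lemma prod_AONT (Y X : finType) t s (pY : word Y s -> word Y s) (pX : word X s -> word X s) :
  is_AONT t pY -> is_AONT t pX ->
  is_AONT t (fun z : word (Y * X)%type s => fpr (pY (fm1 z)) (pX (fm2 z))).
Proof.
move=> [[gY c1Y c2Y] hY] [[gX c1X c2X] hX]; split.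
  exists (fun z : word (Y * X)%type s => fpr (gY (fm1 z)) (gX (fm2 z))) => z.
    by rewrite fm1_pr fm2_pr c1Y c1X pr_fm.
  by rewrite fm1_pr fm2_pr c2Y c2X pr_fm.
move=> I J HI HJ.
have [GY d1Y d2Y] := hY I J HI HJ.
have [GX d1X d2X] := hX I J HI HJ.
exists (fun ab => fpr (GY (fm1 ab.1, fm1 ab.2)) (GX (fm2 ab.1, fm2 ab.2))).
  move=> z /=.
  rewrite !fm1_restr !fm2_restr fm1_pr fm2_pr.
  by rewrite (d1Y (fm1 z)) (d1X (fm2 z)) pr_fm.
move=> [a b] /=.
rewrite fm1_pr fm2_pr restr_pr restr_pr.
have EY := d2Y (fm1 a, fm1 b). have EX := d2X (fm2 a, fm2 b).
case: EY => -> ->. case: EX => -> ->.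
by rewrite !pr_fm.
Qed.

Theorem lemma3p1 (t s m n : nat) :
  t <= s -> 1 <= m -> 1 <= n ->
  AONT_exists t s n -> AONT_exists t s m -> AONT_exists t s (m * n).
Proof.
move=> _ _ _ [X [cX [pX hX]]] [Y [cY [pY hY]]].
exists (Y * X)%type; split; first by rewrite card_prod cX cY.
by eexists; apply: prod_AONT hY hX.
Qed.
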